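(* Let $1\le s\le n$, $0<\gamma<1$, and let $\mathbf{D}=[\mathbf{d}_1,\dots,\mathbf{d}_n]\in\mathbb{R}^{d\times n}$ be any matrix with $\max\{\|\mathbf{d}_i\|_2^2:i\in[n]\}\le\rho$. Then \[ w(\mathbf{D}S_\gamma)\ \le\ 6\gamma^{-1}\sqrt{s\rho\log(\sqrt2\,n/s)}. \]
   Context: $S_\gamma:=\{\mathbf{x}\in\mathbb{R}^n:\|\mathbf{x}\|_2=1,\ \|\mathbf{x}_T\|_1\ge\gamma\|\mathbf{x}_{T^c}\|_1\text{ for some }T\subset[n],|T|\le s\}$, where $\mathbf{x}_T$ agrees with $\mathbf{x}$ on $T$ and is $0$ elsewhere. $\mathbf{D}S_\gamma=\{\mathbf{D}\mathbf{x}:\mathbf{x}\in S_\gamma\}$, and $w(T)=\mathbb{E}\sup_{\mathbf{x}\in T}\langle\mathbf{g},\mathbf{x}\rangle$ with $\mathbf{g}\sim N(\mathbf{0},\mathbf{I}_d)$ is the Gaussian width. *)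

(* Defs.v *)
From HB Require Import structures.
From mathcomp Require Import all_boot all_order all_algebra.
From mathcomp Require Import all_classical all_reals all_analysis.
From mathcomp Require Import normal_distribution.
Set Implicit Arguments. Unset Strict Implicit. Unset Printing Implicit Defensive.
Import Order.TTheory GRing.Theory Num.Theory.
Local Open Scope classical_set_scope.
Local Open Scope ring_scope.

(* Expectation E[f(g)] for g ~ N(0, I_d), g a row vector in R^d, computed as
   the iterated integral over the d independent standard normal coordinates. *)
Fixpoint gauss_expect {R : realType} (d : nat) : ('rV[R]_d -> \bar R) -> \bar R :=
  match d return ('rV[R]_d -> \bar R) -> \bar R with
  | 0 => fun f => f 0
  | d'.+1 => fun f =>
      (\int[normal_prob (0:R) 1]_x
         gauss_expect (fun v : 'rV[R]_d' => f (row_mx (\row_(j < 1) x) v)))%E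
  end.

Definition inner {R : realType} {d : nat} (u v : 'rV[R]_d) : R :=
  \sum_(i < d) u 0 i * v 0 i.

Definition gaussian_width {R : realType} {d : nat} (A : set 'rV[R]_d) : \bar R :=
  gauss_expect (fun g => ereal_sup [set (inner g y)%:E | y in A]).

Definition S_gamma {R : realType} (n s : nat) (gamma : R) : set 'rV[R]_n :=
  [set x | \sum_(i < n) x 0 i ^+ 2 = 1 /\
     exists T : {set 'I_n}, (#|T| <= s)%N /\
       \sum_(i in T) `|x 0 i| >= gamma * \sum_(i in ~: T) `|x 0 i| ].

Definition DS_gamma {R : realType} (d n s : nat) (D : 'M[R]_(d, n)) (gamma : R)
  : set 'rV[R]_d :=
  [set (D *m x^T)^T | x in S_gamma s gamma].

(* Main.v *)
Require Import Defs.
From HB Require Import structures.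
From mathcomp Require Import all_boot all_order all_algebra.
From mathcomp Require Import all_classical all_reals all_analysis.
From mathcomp Require Import normal_distribution.
From mathcomp Require Import measurable_realfun.
From mathcomp Require Import ring lra.
Import Order.TTheory GRing.Theory Num.Theory.
Local Open Scope classical_set_scope.
Local Open Scope ring_scope.

Section S.
Context {R : realType}.
Local Notation mu := (@lebesgue_measure R).

Lemma normal_change (f : R -> \bar R) : (forall x, (0 <= f x)%E) -> measurable_fun setT f ->
  (\int[normal_prob (0:R) 1]_x f x = \int[mu]_x (f x * (normal_pdf 0 1 x)%:E))%E.
Proof.
move=> f0 mf.
have dom := @normal_prob_dominates R 0 1.
rewrite -(Radon_Nikodym_SigmaFinite.change_of_variables dom)//.
apply: ae_eq_integral => //.
- apply: emeasurable_funM => //.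
  apply: (measurable_int mu).
  exact: Radon_Nikodym_SigmaFinite.f_integrable.
- apply: emeasurable_funM => //; apply/measurableT_comp => //.
  exact: measurable_normal_pdf.
- apply: ae_eqe_mul2l => /=.
  apply: integral_ae_eq => //.
  + exact: Radon_Nikodym_SigmaFinite.f_integrable.
  + by apply/measurableT_comp => //; exact: measurable_normal_pdf.
  + move=> E _ mE; rewrite -Radon_Nikodym_SigmaFinite.f_integral//.
Qed.

Lemma normal_exp (b : R) :
  (\int[normal_prob (0:R) 1]_x (expR (b * x))%:E = (expR (b ^+ 2 / 2))%:E)%E.
Proof.
have m1 : measurable_fun [set: R] (fun x => (expR (b * x))%:E).
  by apply/measurable_EFinP; apply: measurableT_comp => //; exact: measurable_funM.
rewrite normal_change//.
transitivity (\int[mu]_x ((expR (b ^+ 2 / 2))%:E * (normal_pdf b 1 x)%:E))%E.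
  apply: eq_integral => x _; rewrite -!EFinM; congr EFin.
  rewrite /normal_pdf oner_eq0 /= /normal_fun.
  rewrite mulrCA [RHS]mulrCA; congr (_ * _).
  rewrite -!expRD; congr expR.
  by rewrite expr1n; field.
transitivity ((expR (b ^+ 2 / 2))%:E * (\int[mu]_x (normal_pdf b 1 x)%:E))%E.
  exact: (integralZl measurableT (integrable_normal_pdf b 1)).
have := @integral_normal_pdf R b 1 => ->.
by rewrite mule1.
Qed.
End S.

Section S.
Context {R : realType}.

Lemma le_integral_any d (T : measurableType d) (mu : {measure set T -> \bar R})
  (D : set T) (f g : T -> \bar R) : (forall x, (f x <= g x)%E) ->
  (\int[mu]_(x in D) f x <= \int[mu]_(x in D) g x)%E.
Proof.
move=> fg; rewrite /integral; apply: leeB.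
- apply: ereal_sup_le => z [h hf <-]; exists h; last by [].
  move=> x /=; apply: (le_trans (hf x)); rewrite /patch !funeposE.
  case: (x \in D); last exact: lexx.
  by rewrite ge_max !le_max fg lexx !orbT.
- apply: ereal_sup_le => z [h hf <-]; exists h; last by [].
  move=> x /=; apply: (le_trans (hf x)); rewrite /patch !funenegE.
  case: (x \in D); last exact: lexx.
  by rewrite ge_max !le_max leeN2 fg lexx !orbT.
Qed.

Lemma gauss_expect_le d (f h : 'rV[R]_d -> \bar R) :
  (forall v, (f v <= h v)%E) -> (gauss_expect f <= gauss_expect h)%E.
Proof.
elim: d f h => [|d IH] f h fh /=; first exact: fh.
by apply: le_integral_any => x; apply: IH => v; exact: fh.
Qed.
End S.

Section S.
Context {R : realType}.

Lemma inner_row_mx d (a : 'rV[R]_(1 + d)) (x : R) (v : 'rV[R]_d) :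
  inner a (row_mx (\row_(j < 1) x) v) = a 0 ord0 * x + inner (rsubmx a) v.
Proof.
rewrite /inner big_split_ord /= big_ord1; congr (_ + _).
  rewrite row_mxEl mxE; congr (a 0 _ * _); exact: val_inj.
by apply: eq_bigr => i _; rewrite row_mxEr mxE.
Qed.

Lemma inner_split d (a : 'rV[R]_(1 + d)) :
  inner a a = a 0 ord0 ^+ 2 + inner (rsubmx a) (rsubmx a).
Proof.
rewrite /inner big_split_ord /= big_ord1; congr (_ + _).
  by rewrite expr2; congr (a 0 _ * a 0 _); exact: val_inj.
by apply: eq_bigr => i _; rewrite !mxE.
Qed.

Lemma inner0r d (a : 'rV[R]_d) : inner a 0 = 0.
Proof. by rewrite /inner big1 // => i _; rewrite mxE mulr0. Qed.

Lemma normal_expsum (I : finType) (C b : I -> R) : (forall i, 0 <= C i) ->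
  (\int[normal_prob (0:R) 1]_x (\sum_i C i * expR (b i * x))%:E =
   (\sum_i C i * expR (b i ^+ 2 / 2))%:E)%E.
Proof.
move=> C0.
under eq_integral do rewrite -sumEFin.
rewrite ge0_integral_sum//; last first.
- by move=> i x _; rewrite lee_fin mulr_ge0 ?expR_ge0.
- move=> i; apply/measurable_EFinP; apply: measurable_funM => //.
  by apply: measurableT_comp => //; exact: measurable_funM.
rewrite -sumEFin; apply: eq_bigr => i _.
under eq_integral do rewrite EFinM.
rewrite ge0_integralZl//; last by rewrite lee_fin.
  by rewrite normal_exp EFinM.
by apply/measurable_EFinP; apply: measurableT_comp => //; exact: measurable_funM.
Qed.

Lemma gauss_expect_expsum d (I : finType) (c : I -> R) (a : I -> 'rV[R]_d) :
  (forall i, 0 <= c i) ->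
  gauss_expect (fun g => (\sum_i c i * expR (inner (a i) g))%:E) =
  (\sum_i c i * expR (inner (a i) (a i) / 2))%:E.
Proof.
elim: d c a => [|d IH] c a c0 /=.
  congr EFin; apply: eq_bigr => i _.
  by rewrite inner0r /inner big_ord0 mul0r.
have step : forall x : R,
  gauss_expect (fun v : 'rV[R]_d =>
     (\sum_i c i * expR (inner (a i) (row_mx (\row_(j < 1) x) v)))%:E) =
  (\sum_i (c i * expR (inner (rsubmx (a i : 'rV_(1 + d))) (rsubmx (a i : 'rV_(1 + d))) / 2))
        * expR (a i 0 ord0 * x))%:E.
  move=> x.
  have -> : (fun v : 'rV[R]_d =>
     (\sum_i c i * expR (inner (a i) (row_mx (\row_(j < 1) x) v)))%:E) =
     (fun v => (\sum_i (c i * expR (a i 0 ord0 * x)) *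
          expR (inner (rsubmx (a i : 'rV_(1 + d))) v))%:E).
    apply/funext => v; congr EFin; apply: eq_bigr => i _.
    by rewrite (@inner_row_mx d (a i)) expRD mulrA.
  rewrite IH; last by move=> i; rewrite mulr_ge0 ?expR_ge0.
  by congr EFin; apply: eq_bigr => i _; rewrite mulrAC.
transitivity (\int[normal_prob (0:R) 1]_x
   (\sum_i (c i * expR (inner (rsubmx (a i : 'rV_(1 + d))) (rsubmx (a i : 'rV_(1 + d))) / 2))
        * expR (a i 0 ord0 * x))%:E)%E.
  by apply: eq_integral => x _; exact: step.
rewrite normal_expsum; last by move=> i; rewrite mulr_ge0 ?expR_ge0.
congr EFin; apply: eq_bigr => i _.
rewrite -mulrA -expRD (@inner_split d (a i)).
by congr (_ * expR _); rewrite mulrDl addrC.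
Qed.
End S.

Section S.
Context {R : realType}.

Lemma sq_le_exp (p mu : R) : 0 <= p -> 0 < mu -> p ^+ 2 <= 2 / mu ^+ 2 * expR (mu * p).
Proof.
move=> p0 mu0.
have := expR_ge1Dxn 1 (mulr_ge0 (ltW mu0) p0).
move=> h.
have h2 : (mu * p) ^+ 2 <= 2 * expR (mu * p).
  have e0 := expR_ge0 (mu * p).
  have f2 : (2`!)%:R = 2 :> R by [].
  rewrite f2 in h. nra.
have -> : 2 / mu ^+ 2 * expR (mu * p) = (2 * expR (mu * p)) / mu ^+ 2 by rewrite mulrAC.
by rewrite ler_pdivlMr ?exprn_gt0 // -exprMn (mulrC p).
Qed.

Lemma point_bound (x v tau mu t : R) : 0 <= tau -> 0 < mu -> 0 < t ->
  x * v <= tau * `|x| + t / 2 * x ^+ 2 +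
     expR (- (mu * tau)) / (t * mu ^+ 2) * (expR (mu * v) + expR (- (mu * v))).
Proof.
move=> tau0 mu0 t0.
have E0 : 0 <= expR (- (mu * tau)) / (t * mu ^+ 2) * (expR (mu * v) + expR (- (mu * v))).
  by rewrite mulr_ge0 ?addr_ge0 ?expR_ge0 ?divr_ge0 ?mulr_ge0 ?expR_ge0 ?ltW ?exprn_gt0.
have xv : x * v <= `|x| * `|v|.
  by rewrite -normrM ler_norm.
have [vt|tv] := leP `|v| tau.
  have : `|x| * `|v| <= tau * `|x| by rewrite mulrC ler_wpM2r.
  have : 0 <= t / 2 * x ^+ 2 by rewrite mulr_ge0 ?sqr_ge0 ?divr_ge0 ?ltW.
  lra.
set p := `|v| - tau.
have p0 : 0 <= p by rewrite subr_ge0 ltW.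
have h1 : p * `|x| <= t / 2 * x ^+ 2 + p ^+ 2 / (2 * t).
  have : 0 <= (t * `|x| - p) ^+ 2 by exact: sqr_ge0.
  rewrite -[x ^+ 2]real_normK ?num_real //.
  move=> h; rewrite -subr_ge0.
  have -> : t / 2 * `|x| ^+ 2 + p ^+ 2 / (2 * t) - p * `|x| = (t * `|x| - p) ^+ 2 / (2 * t).
    by field; rewrite gt_eqF.
  by rewrite divr_ge0 // mulr_ge0 // ltW.
have h2 : p ^+ 2 <= 2 / mu ^+ 2 * expR (mu * p) by exact: sq_le_exp.
have h3 : expR (mu * p) <= expR (- (mu * tau)) * (expR (mu * v) + expR (- (mu * v))).
  rewrite /p mulrBr addrC expRD ler_wpM2l ?expR_ge0 //.
  case: (ler0P v) => hv.
    by rewrite mulrN; have := expR_ge0 (mu * v); lra.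
  by have := expR_ge0 (- (mu * v)); lra.
have h4 : p ^+ 2 / (2 * t) <= expR (- (mu * tau)) / (t * mu ^+ 2) * (expR (mu * v) + expR (- (mu * v))).
  have -> : expR (- (mu * tau)) / (t * mu ^+ 2) * (expR (mu * v) + expR (- (mu * v)))
     = (2 / mu ^+ 2 * (expR (- (mu * tau)) * (expR (mu * v) + expR (- (mu * v))))) / (2 * t).
    by field; rewrite !gt_eqF ?exprn_gt0.
  rewrite ler_pM2r ?invr_gt0 ?mulr_gt0 //.
  apply: (le_trans h2); rewrite ler_wpM2l // divr_ge0 // ltW // exprn_gt0 //.
have : `|x| * `|v| = tau * `|x| + p * `|x| by rewrite /p; ring.
lra.
Qed.

Lemma amgm_abs (x q : R) : 0 < q -> `|x| <= (q * x ^+ 2 + q^-1) / 2.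
Proof.
move=> q0.
have h : 0 <= (q * `|x| - 1) ^+ 2 / q by rewrite divr_ge0 ?sqr_ge0 ?ltW.
rewrite -subr_ge0.
have -> : (q * x ^+ 2 + q^-1) / 2 - `|x| = (q * `|x| - 1) ^+ 2 / q / 2.
  rewrite -[x ^+ 2]real_normK ?num_real //; field; by rewrite gt_eqF.
by rewrite divr_ge0.
Qed.

Lemma l1_bound n s (gamma : R) (x : 'I_n -> R) (T : {set 'I_n}) :
  (1 <= s)%N -> 0 < gamma -> \sum_i x i ^+ 2 = 1 -> (#|T| <= s)%N ->
  gamma * \sum_(i in ~: T) `|x i| <= \sum_(i in T) `|x i| ->
  \sum_i `|x i| <= (1 + gamma^-1) * Num.sqrt s%:R.
Proof.
move=> s1 g0 x1 Ts hT.
set q := Num.sqrt s%:R.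
have q0 : 0 < q by rewrite sqrtr_gt0 ltr0n.
have qq : q ^+ 2 = s%:R by rewrite sqr_sqrtr // ler0n.
have split1 : forall F : 'I_n -> R,
  \sum_i F i = \sum_(i in T) F i + \sum_(i in ~: T) F i.
  move=> F; rewrite (bigID (fun i => i \in T)) /=; congr (_ + _).
  by apply: eq_bigl => i; rewrite !inE.
have hT2 : \sum_(i in T) x i ^+ 2 <= 1.
  rewrite -x1 (split1 (fun i => x i ^+ 2)) lerDl.
  by apply: sumr_ge0 => i _; exact: sqr_ge0.
have hTq : \sum_(i in T) `|x i| <= q.
  apply: (@le_trans _ _ (\sum_(i in T) ((q * x i ^+ 2 + q^-1) / 2))).
    by apply: ler_sum => i _; exact: amgm_abs.
  rewrite -mulr_suml big_split /= -mulr_sumr sumr_const.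
  have hc : (q^-1 *+ #|T|) <= q.
    rewrite -mulr_natr ler_pdivrMl // -expr2 qq ler_nat //.
  have : q * \sum_(i in T) x i ^+ 2 <= q by rewrite ler_piMr // ltW.
  move=> h1.
  rewrite ler_pdivrMr //; lra.
rewrite (split1 (fun i => `|x i|)).
have hC : \sum_(i in ~: T) `|x i| <= gamma^-1 * \sum_(i in T) `|x i|.
  by rewrite ler_pdivlMl.
have gi : 0 < gamma^-1 by rewrite invr_gt0.
have : gamma^-1 * \sum_(i in T) `|x i| <= gamma^-1 * q by rewrite ler_pM2l.
nra.
Qed.

Lemma sum_bound n s (gamma tau mu t : R) (x v : 'I_n -> R) (T : {set 'I_n}) :
  (1 <= s)%N -> 0 < gamma -> 0 <= tau -> 0 < mu -> 0 < t ->
  \sum_i x i ^+ 2 = 1 -> (#|T| <= s)%N ->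
  gamma * \sum_(i in ~: T) `|x i| <= \sum_(i in T) `|x i| ->
  \sum_i x i * v i <= tau * ((1 + gamma^-1) * Num.sqrt s%:R) + t / 2 +
     \sum_i expR (- (mu * tau)) / (t * mu ^+ 2) * (expR (mu * v i) + expR (- (mu * v i))).
Proof.
move=> s1 g0 tau0 mu0 t0 x1 Ts hT.
have hl1 := @l1_bound n s gamma x T s1 g0 x1 Ts hT.
apply: (@le_trans _ _ (\sum_i (tau * `|x i| + t / 2 * x i ^+ 2 +
     expR (- (mu * tau)) / (t * mu ^+ 2) * (expR (mu * v i) + expR (- (mu * v i)))))).
  by apply: ler_sum => i _; exact: point_bound.
rewrite !big_split /= -!mulr_sumr x1 mulr1 lerD2r lerD2r.
by rewrite ler_wpM2l.
Qed.
End S.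

Section S.
Context {R : realType}.

Lemma innerZl d (k : R) (a g : 'rV[R]_d) : inner (k *: a) g = k * inner a g.
Proof. by rewrite /inner mulr_sumr; apply: eq_bigr => i _; rewrite mxE mulrA. Qed.

Lemma innerZr d (k : R) (a g : 'rV[R]_d) : inner a (k *: g) = k * inner a g.
Proof. by rewrite /inner mulr_sumr; apply: eq_bigr => i _; rewrite mxE mulrCA. Qed.

Lemma inner0l d (g : 'rV[R]_d) : inner 0 g = 0.
Proof. by rewrite /inner big1 // => i _; rewrite mxE mul0r. Qed.

Lemma inner_Dx d n (D : 'M[R]_(d, n)) (g : 'rV[R]_d) (x : 'rV[R]_n) :
  inner g ((D *m x^T)^T) = \sum_i x 0 i * inner (\row_j D j i) g.
Proof.
rewrite /inner.
under eq_bigr do rewrite !mxE mulr_sumr.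
rewrite exchange_big /=; apply: eq_bigr => i _.
rewrite mulr_sumr; apply: eq_bigr => j _; rewrite !mxE; ring.
Qed.

Lemma inner_col d n (D : 'M[R]_(d, n)) i :
  inner (\row_j D j i) (\row_j D j i) = \sum_j D j i ^+ 2.
Proof. by apply: eq_bigr => j _; rewrite !mxE expr2. Qed.


Lemma width_bound d n s (gamma rho tau mu t : R) (D : 'M[R]_(d, n)) :
  (1 <= s)%N -> 0 < gamma -> 0 <= tau -> 0 < mu -> 0 < t ->
  (forall i : 'I_n, \sum_(j < d) D j i ^+ 2 <= rho) ->
  (gaussian_width (DS_gamma s D gamma) <=
   (tau * ((1 + gamma^-1) * Num.sqrt s%:R) + t / 2 +
    n%:R * (2 * (expR (- (mu * tau)) / (t * mu ^+ 2)) * expR (mu ^+ 2 * rho / 2)))%:E)%E.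
Proof.
move=> s1 g0 tau0 mu0 t0 hD.
set C := expR (- (mu * tau)) / (t * mu ^+ 2).
set K := tau * ((1 + gamma^-1) * Num.sqrt s%:R) + t / 2.
have C0 : 0 <= C by rewrite divr_ge0 ?expR_ge0 // mulr_ge0 ?ltW ?exprn_gt0.
have K0 : 0 <= K.
  rewrite /K; apply: addr_ge0; last by rewrite divr_ge0 // ltW.
  apply: mulr_ge0 => //; apply: mulr_ge0; last exact: sqrtr_ge0.
  by apply: addr_ge0 => //; rewrite invr_ge0 ltW.
pose col (i : 'I_n) : 'rV[R]_d := \row_j D j i.
pose c (k : (('I_n + 'I_n) + 'I_1)%type) : R :=
  match k with inl _ => C | inr _ => K end.
pose a (k : (('I_n + 'I_n) + 'I_1)%type) : 'rV[R]_d :=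
  match k with inl (inl i) => mu *: col i | inl (inr i) => (- mu) *: col i
             | inr _ => 0 end.
have c0 : forall k, 0 <= c k.
  by move=> [[i|i]|i]; rewrite /c.
have sumE : forall F : (('I_n + 'I_n) + 'I_1)%type -> R,
  \sum_k F k = \sum_i F (inl (inl i)) + \sum_i F (inl (inr i)) + F (inr ord0).
  by move=> F; rewrite big_sumType /= big_sumType /= big_ord1.
rewrite /gaussian_width.
apply: (le_trans (@gauss_expect_le R d _
  (fun g => (\sum_k c k * expR (inner (a k) g))%:E) _)).
  move=> g; apply: ge_ereal_sup => _ [y [x [x1 [T [Ts hT]]] <-] <-].
  rewrite lee_fin inner_Dx sumE /= inner0l expR0 mulr1.
  apply: (le_trans (@sum_bound R n s gamma tau mu t (fun i => x 0 i)
     (fun i => inner (col i) g) T s1 g0 tau0 mu0 t0 x1 Ts hT)).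
  rewrite [leRHS]addrC -big_split /=; apply: lerD; first exact: lexx.
  by apply: ler_sum => i _; rewrite !innerZl mulNr mulrDr.
rewrite gauss_expect_expsum // lee_fin sumE /= inner0l mul0r expR0 mulr1.
rewrite -/K -/C addrC lerD2l -big_split /=.
have -> : n%:R * (2 * C * expR (mu ^+ 2 * rho / 2)) =
   \sum_(i < n) (2 * C * expR (mu ^+ 2 * rho / 2)).
  by rewrite sumr_const card_ord mulr_natl.
apply: ler_sum => i _; rewrite !innerZl !innerZr.
have hX : inner (col i) (col i) <= rho by rewrite inner_col; exact: hD.
set X := inner (col i) (col i) in hX *.
have h1 : expR (mu * (mu * X) / 2) <= expR (mu ^+ 2 * rho / 2).
  rewrite ler_expR; have := sqr_ge0 mu; nra.
have h2 : expR (- mu * (- mu * X) / 2) <= expR (mu ^+ 2 * rho / 2).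
  rewrite ler_expR; have := sqr_ge0 mu; nra.
have := ler_wpM2l C0 h1; have := ler_wpM2l C0 h2; lra.
Qed.

Lemma width_zero d n s (gamma : R) (D : 'M[R]_(d, n)) :
  (forall i : 'I_n, \sum_(j < d) D j i ^+ 2 <= 0) ->
  (gaussian_width (DS_gamma s D gamma) <= 0)%E.
Proof.
move=> hD.
have D0 : forall i j, D j i = 0.
  move=> i j; apply/eqP; rewrite -sqrf_eq0; apply/eqP.
  have h : \sum_(j < d) D j i ^+ 2 = 0.
    by apply/eqP; rewrite eq_le hD sumr_ge0 // => k _; exact: sqr_ge0.
  by move/psumr_eq0P : h => -> // k _; exact: sqr_ge0.
rewrite /gaussian_width.
apply: (le_trans (@gauss_expect_le R d _
  (fun g => (\sum_(k < 1) 0 * expR (inner (0 : 'rV[R]_d) g))%:E) _)).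
  move=> g; apply: ge_ereal_sup => _ [y [x _ <-] <-].
  rewrite lee_fin inner_Dx [X in _ <= X]big1; last by move=> k _; rewrite mul0r.
  rewrite big1 // => i _.
  by rewrite /inner big1 ?mulr0 // => j _; rewrite mxE D0 mul0r.
by rewrite gauss_expect_expsum // big1 // => k _; rewrite mul0r.
Qed.

End S.


Lemma ln_lb {R : realType} (y : R) : 0 < y -> 1 - y^-1 <= ln y.
Proof.
move=> y0; have := expR_ge1Dx (- ln y).
rewrite expRN lnK ?posrE //; lra.
Qed.

Lemma expR_half {R : realType} : expR (1 / 2 : R) <= 2.
Proof.
have e0 := expR_gt0 (1 / 2 : R).
have := expR_ge1Dx (- (1 / 2) : R); rewrite expRN => h.
have := ler_wpM2l (ltW e0) h; rewrite mulfV ?gt_eqF // => h2.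
lra.
Qed.

Theorem theorem4p8 (R : realType) (d n s : nat) (gamma rho : R)
  (D : 'M[R]_(d, n)) :
  (1 <= s)%N -> (s <= n)%N -> 0 < gamma -> gamma < 1 ->
  (forall i : 'I_n, \sum_(j < d) D j i ^+ 2 <= rho) ->
  (gaussian_width (DS_gamma s D gamma) <=
   (6 * gamma^-1 * Num.sqrt (s%:R * rho * ln (Num.sqrt 2 * n%:R / s%:R)))%:E)%E.
Proof.
move=> s1 sn g0 g1 hD.
have n0 : (0 < n)%N by apply: leq_trans sn.
have rho0 : 0 <= rho.
  apply: le_trans (hD (Ordinal n0)); apply: sumr_ge0 => j _; exact: sqr_ge0.
have gi1 : 1 <= gamma^-1 by rewrite invf_ge1 // ltW.
have RHS0 : 0 <= 6 * gamma^-1 * Num.sqrt (s%:R * rho * ln (Num.sqrt 2 * n%:R / s%:R)).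
  by rewrite mulr_ge0 ?sqrtr_ge0 // mulr_ge0 // invr_ge0 ltW.
have [rho_0|rho_pos] := eqVneq rho 0.
  apply: (le_trans (@width_zero R d n s gamma D _)); last by rewrite lee_fin.
  by move=> i; have := hD i; rewrite rho_0.
have rhop : 0 < rho by rewrite lt_def rho_pos.
set sR := s%:R : R. set nR := n%:R : R.
have sR1 : 1 <= sR by rewrite /sR ler1n.
have snR : sR <= nR by rewrite /sR /nR ler_nat.
set r2 := Num.sqrt (2 : R).
have r2p : 0 < r2 by rewrite sqrtr_gt0.
have r22 : r2 ^+ 2 = 2 by rewrite sqr_sqrtr.
have r2lb : 7 / 5 <= r2 by nra.
have r2ub : r2 <= 3 / 2 by nra.
set y := r2 * nR / sR.
have sRp : 0 < sR by lra.
have nRp : 0 < nR by lra.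
have yp : 0 < y by rewrite /y divr_gt0 // mulr_gt0.
set l := ln y.
have hl : 1 - sR / (r2 * nR) <= l.
  by have := @ln_lb R y yp; rewrite {1}/y invf_div.
have hk : sR / (r2 * nR) <= 3 / 4.
  rewrite ler_pdivrMr ?mulr_gt0 //; nra.
have l13 : 1 / 4 <= l by lra.
have lp : 0 < l by lra.
set sig := Num.sqrt rho.
have sigp : 0 < sig by rewrite sqrtr_gt0.
have sig2 : sig ^+ 2 = rho by rewrite sqr_sqrtr // ltW.
set a := Num.sqrt l.
have ap : 0 < a by rewrite sqrtr_gt0.
have a2 : a ^+ 2 = l by rewrite sqr_sqrtr // ltW.
set q := Num.sqrt sR.
have qp : 0 < q by rewrite sqrtr_gt0.
have q2 : q ^+ 2 = sR by rewrite sqr_sqrtr // ltW.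
set m := Num.sqrt nR.
have mp : 0 < m by rewrite sqrtr_gt0.
have m2 : m ^+ 2 = nR by rewrite sqr_sqrtr // ltW.
have -> : Num.sqrt (sR * rho * l) = q * sig * a.
  by rewrite sqrtrM ?mulr_ge0 ?ltW // sqrtrM ?ltW.
have key : 0 < q * sig * a by rewrite !mulr_gt0.
have [small|big] := ltP nR (2 * sR).
  set t := 2 * r2 * m * sig.
  have tp : 0 < t by rewrite /t !mulr_gt0.
  apply: (le_trans (@width_bound R d n s gamma rho 0 sig^-1 t D s1 g0 (lexx 0) _ tp hD));
    first by rewrite invr_gt0.
  rewrite lee_fin -/nR mulr0 oppr0 expR0 mul0r add0r.
  have -> : sig^-1 ^+ 2 * rho / 2 = 1 / 2 by rewrite -sig2; field; rewrite gt_eqF.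
  have -> : nR * (2 * (1 / (t * sig^-1 ^+ 2)) * expR (1 / 2)) =
            (2 * nR * sig ^+ 2 / t) * expR (1 / 2) by field; rewrite !gt_eqF.
  have c0 : 0 <= 2 * nR * sig ^+ 2 / t by rewrite divr_ge0 ?mulr_ge0 ?sqr_ge0 ?ltW.
  have h1 := ler_wpM2l c0 (@expR_half R).
  have h2 : 2 * nR * sig ^+ 2 / t * 2 = r2 * m * sig.
    have hr : r2 = 2 / r2 by rewrite -[in RHS]r22; field; rewrite gt_eqF.
    rewrite [in RHS]hr /t -m2; field.
    by rewrite !gt_eqF.
  have h3 : t / 2 = r2 * m * sig by rewrite /t; field.
  suff : 2 * r2 * m * sig <= 6 * q * sig * a.
    have : 6 * q * sig * a <= 6 * gamma^-1 * (q * sig * a).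
      have : 0 <= (gamma^-1 - 1) * (q * sig * a) by apply: mulr_ge0; [rewrite subr_ge0 | exact: ltW].
      lra.
    lra.
  suff hsq : (2 * r2 * m * sig) ^+ 2 <= (6 * q * sig * a) ^+ 2.
    have hx : 0 <= 2 * r2 * m * sig by rewrite !mulr_ge0 ?ltW.
    have hy : 0 <= 6 * q * sig * a by rewrite !mulr_ge0 ?ltW.
    nra.
  rewrite !exprMn sig2 a2 q2 r22 m2.
  have hpoly : 2 * r2 * nR ^+ 2 <= 9 * r2 * sR * nR - 9 * sR ^+ 2.
    have P1 : 0 <= (nR - sR) * (2 * sR - nR) * r2.
      by apply: mulr_ge0; [apply: mulr_ge0; rewrite subr_ge0 // ltW | exact: ltW].
    have P2 : 0 <= sR * (nR - sR) * r2.
      by apply: mulr_ge0; [apply: mulr_ge0; [exact: ltW | rewrite subr_ge0] | exact: ltW].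
    have P3 : 0 <= sR ^+ 2 * (7 * r2 - 9) by rewrite mulr_ge0 ?sqr_ge0 //; lra.
    lra.
  have hw : sR / (r2 * nR) * (r2 * nR) = sR by rewrite mulfVK // gt_eqF // mulr_gt0.
  set w := sR / (r2 * nR) in hl hw hk *.
  have : 0 <= r2 * nR * (9 * sR * (1 - w) - 2 * nR).
    have -> : r2 * nR * (9 * sR * (1 - w) - 2 * nR) = 9 * r2 * sR * nR - 9 * sR * (w * (r2 * nR)) - 2 * r2 * nR ^+ 2 by ring.
    rewrite hw; lra.
  rewrite pmulr_rge0 ?mulr_gt0 // => h4.
  have : 9 * sR * (1 - w) <= 9 * sR * l by rewrite ler_pM2l ?mulr_gt0.
  move=> h5; have h6 : 2 * nR <= 9 * sR * l by lra.
  have := ler_wpM2l (ltW rhop) h6; nra.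
set tau := r2 * sig * a.
set mu := r2 * a / sig.
set t := q * sig / a.
have taup : 0 <= tau by rewrite /tau !mulr_ge0 ?ltW.
have mup : 0 < mu by rewrite /mu divr_gt0 ?mulr_gt0.
have tp : 0 < t by rewrite /t divr_gt0 ?mulr_gt0.
apply: (le_trans (@width_bound R d n s gamma rho tau mu t D s1 g0 taup mup tp hD)).
rewrite lee_fin -/nR -/sR -/q.
set ir := r2^-1.
have irub : ir <= 5 / 7.
  rewrite /ir -[X in _ <= X]invrK lef_pV2 ?posrE //; lra.
have T1 : tau * ((1 + gamma^-1) * q) = r2 * (1 + gamma^-1) * l * t.
  by rewrite /tau /t -a2; field; rewrite !gt_eqF.
have hw : sR / (r2 * nR) * (r2 * nR) = sR by rewrite mulfVK // gt_eqF // mulr_gt0.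
set w := sR / (r2 * nR) in hl hw hk *.
have hE : expR (- (mu * tau)) * expR (mu ^+ 2 * rho / 2) = w.
  rewrite -expRD.
  have -> : - (mu * tau) + mu ^+ 2 * rho / 2 = - (r2 ^+ 2 * a ^+ 2) / 2.
    by rewrite /mu /tau -sig2; field; rewrite gt_eqF.
  rewrite r22 a2 (_ : - (2 * l) / 2 = - l); last by field.
  by rewrite expRN lnK ?posrE // /w /y invf_div.
have T3 : nR * (2 * (expR (- (mu * tau)) / (t * mu ^+ 2)) * expR (mu ^+ 2 * rho / 2))
   = t * ir.
  have -> : nR * (2 * (expR (- (mu * tau)) / (t * mu ^+ 2)) * expR (mu ^+ 2 * rho / 2))
     = 2 * nR * (expR (- (mu * tau)) * expR (mu ^+ 2 * rho / 2)) / (t * mu ^+ 2).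
    by field; rewrite !gt_eqF // exprn_gt0.
  rewrite hE /w -q2 /t /mu /ir -{1}r22; field.
  by rewrite !gt_eqF.
rewrite T1 T3.
have hw2 : w * r2 <= 1 / 2.
  have : w * r2 * nR <= nR / 2 by rewrite -mulrA hw; lra.
  move=> h; have := nRp; nra.
have w0 : 0 <= w by rewrite /w divr_ge0 ?mulr_ge0 ?ltW.
have hw3 : w <= 5 / 14 by nra.
have l64 : 9 / 14 <= l by lra.
set g := gamma^-1.
have S : r2 * (1 + g) * l + 1 / 2 + ir <= 6 * g * l.
  have gg : 1 <= g by [].
  have P1 : 0 <= (3 / 2 - r2) * (g * l) by apply: mulr_ge0; [lra | apply: mulr_ge0; lra].
  have P2 : 0 <= (3 / 2 - r2) * l by apply: mulr_ge0; lra.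
  have P3 : 0 <= (g - 1) * l by apply: mulr_ge0; lra.
  lra.
have := ler_wpM2r (ltW tp) S.
have -> : 6 / gamma * (q * sig * a) = 6 * g * l * t.
  by rewrite /g /t -a2; field; rewrite !gt_eqF.
move=> h; apply: le_trans h; rewrite le_eqVlt; apply/orP; left; apply/eqP.
rewrite /g; ring.
Qed.
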